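(* Let $\mathcal G$ be a core network with input nodes $\iota_1,\dots,\iota_n$ and output node $o$, fix $m$ with the vestigial subnetwork $\mathcal D_m$ nonempty, and let $\mathcal D_{m,1},\dots,\mathcal D_{m,n_m}$ be the subnetworks associated to the diagonal blocks of the Frobenius–König normal form of $J_{\mathcal D_m}$. Then for every $j=1,\dots,n_m$, $\mathcal D_{m,j}$ contains an $\iota_k$-simple node for some $k\in\{1,\dots,n\}$, $k\neq m$.
   Context: Node $b$ is downstream from $a$ (and $a$ upstream from $b$) if there is a directed path from $a$ to $b$ (every node is up/downstream from itself). $\mathcal G$ is a core network if every node is upstream from $o$ and downstream from at least one input node. $\mathcal G_m$ is the subnetwork of nodes downstream from $\iota_m$ and upstream from $o$; $\mathcal D_m$ consists of the nodes not downstream from $\iota_m$ with all arrows of $\mathcal G$ between them. A simple path visits each node at most once; an $\iota_ko$-simple path is a simple path from $\iota_k$ to $o$; a node is $\iota_k$-simple if it lies on some $\iota_ko$-simple path. Each node $j$ carries a function $f_j$; the partial derivatives $f_{j,x_\ell}$ (one per arrow $\ell\to j$, plus a self-coupling $f_{j,x_j}$ for every node) are independent indeterminates, and $J_{\mathcal K}=(f_{j,x_\ell})_{j,\ell\in\mathcal K}$. By Frobenius–König theory, there are permutation matrices with $P_mJ_{\mathcal D_m}Q_m$ block upper triangular with square fully indecomposable diagonal blocks $D_{m,j}$; each $D_{m,j}$ of order $k_j$ contains exactly $k_j$ self-couplings and after row/column permutation equals $J_{\mathcal D_{m,j}}$ for the set $\mathcal D_{m,j}$ of nodes indexing its rows,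 which (with all arrows between its nodes) is the associated subnetwork. *)

(* Defs.v *)
From mathcomp Require Import all_boot.
Set Implicit Arguments. Unset Strict Implicit. Unset Printing Implicit Defensive.

(* A network: finite node type V, arrows given by e : rel V
   (e a b  <=>  there is an arrow a -> b). *)

Definition downstream {V : finType} (e : rel V) (a b : V) : bool := connect e a b.

Definition core_network {V : finType} (e : rel V) (n : nat)
  (iota : 'I_n -> V) (o : V) : Prop :=
  forall v : V, downstream e v o /\ exists k : 'I_n, downstream e (iota k) v.

Definition vestigial {V : finType} (e : rel V) (n : nat)
  (iota : 'I_n -> V) (m : 'I_n) : {set V} :=
  [set v | ~~ downstream e (iota m) v].

Definition simple_path {V : finType} (e : rel V) (a b : V) (p : seq V) : Prop :=
  path e a p /\ last a p = b /\ uniq (a :: p).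

Definition simple_node {V : finType} (e : rel V) (a o w : V) : Prop :=
  exists p : seq V, simple_path e a o p /\ w \in a :: p.

(* Zero pattern of the generalized Jacobian: the entry (row j, column l)
   of J is the indeterminate f_{j,x_l}, present iff l -> j is an arrow or
   j = l (self-coupling); otherwise it is 0. *)
Definition J_nz {V : finType} (e : rel V) (j l : V) : bool := (j == l) || e l j.

(* J_B (rows and columns indexed by B) is fully indecomposable: it is
   square of order k = #|B| >= 1, for k = 1 its entry is nonzero, and it
   has no s x (k - s) zero submatrix for 1 <= s <= k - 1. Since the
   nonzero entries are independent indeterminates, being zero is a
   property of the pattern J_nz. *)
Definition fully_indecomposable {V : finType} (e : rel V) (B : {set V}) : Prop :=
  0 < #|B| /\
  (#|B| = 1 -> forall a, a \in B -> J_nz e a a) /\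
  (forall S T : {set V}, S \subset B -> T \subset B ->
     0 < #|S| < #|B| -> #|S| + #|T| = #|B| ->
     exists a b, [/\ a \in S, b \in T & J_nz e a b]).

(* Frobenius-Koenig normal form of J_{D}, described through the node sets
   of its diagonal blocks (ordered 0..r-1): the blocks partition D, each
   block is nonempty, J_D is block upper triangular w.r.t. this ordering
   (entries in row block i and column block j with j < i vanish), and each
   diagonal block J_{D_j} is fully indecomposable. *)
Definition FK_normal_form {V : finType} (e : rel V) (D : {set V})
  (r : nat) (blk : 'I_r -> {set V}) : Prop :=
  [/\ (forall i, blk i \subset D),
      (forall v, v \in D -> exists i, v \in blk i),
      (forall i j, i != j -> [disjoint blk i & blk j]),
      (forall i j : 'I_r, (j < i)%N ->
          forall a b, a \in blk i -> b \in blk j -> ~~ J_nz e a b)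
    & (forall i, fully_indecomposable e (blk i))].

(* Main.v *)
Require Import Defs.
From mathcomp Require Import all_boot.

Lemma first_hit (V : finType) (e : rel V) (A : {set V}) (a : V) (p : seq V) :
  path e a p -> last a p \in A ->
  exists q, [/\ path [rel x y | e x y && (x \notin A)] a q & last a q \in A].
Proof.
elim: p a => [|b p IH] a /=; first by move=> _ H; exists [::].
move=> /andP[eab pb] Hl.
have [aA|aA] := boolP (a \in A); first by exists [::].
have [q [pq lq]] := IH b pb Hl.
by exists (b :: q); rewrite /= eab aA pq.
Qed.

Lemma prefix_notin (V : finType) (e : rel V) (A : {set V}) (a x : V) (q : seq V) :
  path [rel x y | e x y && (x \notin A)] a q -> x \in a :: q -> x != last a q ->
  x \notin A.
Proof.
elim: q a => [|b q IH] a /=.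
  by rewrite inE => _ /eqP ->; rewrite eqxx.
move=> /andP[/andP[_ aA] pq]; rewrite inE => /orP[/eqP -> //|xq] xl.
exact: IH pq xq xl.
Qed.

Lemma mono (V : finType) (e : rel V) (n : nat) (iota : 'I_n -> V) (m : 'I_n)
  (r : nat) (blk : 'I_r -> {set V}) :
  FK_normal_form e (vestigial e iota m) blk ->
  forall x y i, connect e x y -> y \in blk i ->
  exists i', x \in blk i' /\ (i <= i')%N.
Proof.
case=> Hsub Hcov Hdis Htri _ x y i /connectP[p].
elim: p x => [|b p IH] x /=; first by move=> _ -> yi; exists i.
move=> /andP[exb pb] yl yi.
have [i'' [bi ii]] := IH b pb yl yi.
have xD : x \in vestigial e iota m.
  rewrite inE; apply/negP => Hx.
  have := subsetP (Hsub i'') b bi; rewrite inE => /negP; apply.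
  by apply: connect_trans Hx (connect1 exb).
have [i' xi'] := Hcov x xD.
exists i'; split => //.
case: (ltnP i' i'') => [lt|le]; last by apply: leq_trans ii le.
by have := Htri i'' i' lt b x bi xi'; rewrite /J_nz exb orbT.
Qed.

Theorem proposition3p8 (V : finType) (e : rel V) (n : nat)
  (iota : 'I_n -> V) (o : V) (m : 'I_n)
  (r : nat) (blk : 'I_r -> {set V}) :
  core_network e iota o ->
  vestigial e iota m != set0 ->
  FK_normal_form e (vestigial e iota m) blk ->
  forall j : 'I_r, exists k : 'I_n,
    k != m /\ exists w, w \in blk j /\ simple_node e (iota k) o w.
Proof.
move=> Hcore _ HFK j.
have HFK' := HFK.
case: HFK' => Hsub Hcov Hdis Htri Hfi.
have [v vj] : exists v, v \in blk j.
  by apply/set0Pn; rewrite -card_gt0; case: (Hfi j).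
have vD := subsetP (Hsub j) v vj.
have [_ [k Hk]] := Hcore v.
exists k; split.
  apply/negP => /eqP km; move: vD; rewrite inE -km; by rewrite Hk.
have /connectP[p pp lp] := Hk.
rewrite lp in vj.
have [q0 [pq0 lq0]] := @first_hit _ _ _ _ _ pp vj.
case: (shortenP pq0) lq0 => q pq uq _ lq.
set u := last (iota k) q in lq *.
have [/connectP[p2 pp2 lp2] _] := Hcore u.
case: (shortenP pp2) lp2 => q2 pq2 uq2 _ lq2.
exists u; split => //.
exists (q ++ q2); split; last by rewrite -cat_cons mem_cat mem_last.
split; first rewrite cat_path.
  apply/andP; split => //.
  by apply: sub_path pq => x y /andP[].
split; first by rewrite last_cat lq2.
have uq2' : uniq q2 by case/andP: uq2.
rewrite -cat_cons cat_uniq uq uq2' andbT /=.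
apply/hasPn => y yq2; apply/negP => yq.
have yu : y != u.
  by apply/eqP => Eyu; move: uq2; rewrite /= -Eyu yq2.
have := @prefix_notin _ _ _ _ _ _ pq yq yu; apply/negP/negPn.
have cyu : connect e y u.
  have [s1 [s2 Es]] : exists s1 s2, iota k :: q = s1 ++ y :: s2.
    by case/splitPr: yq => s1 s2; exists s1, s2.
  apply/connectP; exists s2.
    have : path e (iota k) q by apply: sub_path pq => x z /andP[].
    case: s1 Es => [|z s1] /= [-> Eq]; first by rewrite Eq.
    by rewrite Eq cat_path /= => /andP[_ /andP[]].
  rewrite /u. case: s1 Es => [|z s1] /= [-> ->] //.
  by rewrite last_cat.
have cuy : connect e u y.
  have [s1 [s2 Es]] : exists s1 s2, q2 = s1 ++ y :: s2.
    by case/splitPr: yq2 => s1 s2; exists s1, s2.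
  apply/connectP; exists (s1 ++ [:: y]).
    by move: pq2; rewrite Es -cat1s catA cat_path => /andP[].
  by rewrite last_cat.
have [i1 [yi1 ji1]] := @mono _ _ _ _ _ _ _ HFK _ _ _ cyu lq.
have [i2 [ui2 i1i2]] := @mono _ _ _ _ _ _ _ HFK _ _ _ cuy yi1.
have Ei2 : i2 = j.
  apply/eqP; apply/negPn/negP => ne.
  by have := Hdis _ _ ne; rewrite disjoint_subset => /subsetP/(_ u ui2); rewrite inE lq.
have Ei1 : i1 = j.
  apply: val_inj; apply/eqP; rewrite /= eqn_leq ji1 andbT.
  by rewrite -Ei2.
by rewrite -Ei1.
Qed.
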